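(* Let $g$ be an even $C^1$ function defined in a neighbourhood of $0\in\mathbb{C}$ with $g(z)=o(z)$, and suppose $g$ satisfies the polynomial condition with respect to a polynomial $p(\zeta_1,\zeta_2)$. Then $g$ also satisfies the polynomial condition with respect to the odd part $p_{\mathrm{odd}}(\zeta_1,\zeta_2)=\tfrac12\bigl(p(\zeta_1,\zeta_2)-p(-\zeta_1,-\zeta_2)\bigr)$ of $p$ (equivalently, the sum of the homogeneous components of $p$ of odd degree).
   Context: All functions defined near the origin are assumed to be of class $C^1$. Polynomials $p(\zeta_1,\zeta_2)$ are holomorphic polynomials in two complex variables with complex coefficients. Polynomial condition: let $g$ be an even $C^1$ function defined near $0\in\mathbb{C}$ with $g(z)=o(z)$ as $z\to0$. We say $g$ satisfies the polynomial condition with respect to the polynomial $p$ if for every $C^1$ function $R$ defined near $0$ with $R(z)=o(g(z))$ as $z\to 0$, both $\operatorname{Im} p(z,\bar z+g(z)+R(z))>0$ and $\operatorname{Im} p(z,\bar z-g(z)+R(z))<0$ hold for all $z\neq0$ sufficiently close to $0$ (the neighbourhood may depend on $R$). *)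

(* Defs.v *)
From Stdlib Require Import Reals.
From Coquelicot Require Import Coquelicot.
Open Scope R_scope.

Fixpoint csum (n : nat) (f : nat -> C) : C :=
  match n with
  | O => RtoC 0
  | S m => Cplus (csum m f) (f m)
  end.

Definition poly2 (N : nat) (c : nat -> nat -> C) (z1 z2 : C) : C :=
  csum N (fun i => csum N (fun j => Cmult (c i j) (Cmult (Cpow z1 i) (Cpow z2 j)))).

Definition odd_part (p : C -> C -> C) (z1 z2 : C) : C :=
  Cmult (RtoC (/ 2)) (Cminus (p z1 z2) (p (Copp z1) (Copp z2))).

(* f : C -> C is of class C^1 (in the real sense, C = R^2) on some disc
   around 0: the partial derivatives of Re f and Im f with respect to x and y
   exist and are continuous at every point of the disc. *)
Definition comp_C1_on (u : R -> R -> R) (r : R) : Prop :=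
  (forall x y, Cmod (x, y) < r ->
     ex_derive (fun t => u t y) x /\ ex_derive (fun t => u x t) y) /\
  (forall x y, Cmod (x, y) < r ->
     continuous (fun q : R * R => Derive (fun t => u t (snd q)) (fst q)) (x, y) /\
     continuous (fun q : R * R => Derive (fun t => u (fst q) t) (snd q)) (x, y)).

Definition C1_near0 (f : C -> C) : Prop :=
  exists r, 0 < r /\
    comp_C1_on (fun x y => Re (f (x, y))) r /\
    comp_C1_on (fun x y => Im (f (x, y))) r.

Definition even_near0 (f : C -> C) : Prop :=
  exists r, 0 < r /\ forall z, Cmod z < r -> f (Copp z) = f z.

Definition little_o0 (f h : C -> C) : Prop :=
  forall eps, 0 < eps -> exists delta, 0 < delta /\
    forall z, Cmod z < delta -> Cmod (f z) <= eps * Cmod (h z).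

Definition poly_condition (g : C -> C) (p : C -> C -> C) : Prop :=
  forall Rf : C -> C, C1_near0 Rf -> little_o0 Rf g ->
    exists delta, 0 < delta /\
      forall z, 0 < Cmod z < delta ->
        0 < Im (p z (Cplus (Cplus (Cconj z) (g z)) (Rf z))) /\
        Im (p z (Cplus (Cminus (Cconj z) (g z)) (Rf z))) < 0.

(* Main.v *)
From Stdlib Require Import Reals Lra.
From Coquelicot Require Import Coquelicot.
Require Import Defs.
Open Scope R_scope.

Lemma Cmod_le_abs (a b : R) : Cmod (a, b) <= Rabs a + Rabs b.
Proof.
  unfold Cmod; simpl.
  rewrite <- (sqrt_Rsqr (Rabs a + Rabs b)) by (pose proof (Rabs_pos a); pose proof (Rabs_pos b); lra).
  apply sqrt_le_1_alt. unfold Rsqr.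
  pose proof (Rabs_pos a); pose proof (Rabs_pos b).
  assert (a*a = Rabs a * Rabs a) by (rewrite <- Rabs_mult; rewrite Rabs_right; nra).
  assert (b*b = Rabs b * Rabs b) by (rewrite <- Rabs_mult; rewrite Rabs_right; nra).
  nra.
Qed.

Lemma loc_ball (x y r : R) : Cmod (x, y) < r ->
  locally ((x, y) : R * R) (fun q : R * R => Cmod (fst q, snd q) < r).
Proof.
  intros H.
  assert (He : 0 < (r - Cmod (x,y)) / 2) by lra.
  exists (mkposreal _ He). intros [a b] [Ha Hb]. simpl in *.
  unfold ball in Ha, Hb; simpl in Ha, Hb; unfold AbsRing_ball, abs, minus, plus, opp in Ha, Hb; simpl in Ha, Hb.
  assert (E : (a, b) = Cplus (x, y) (a + - x, b + - y)).
  { unfold Cplus; simpl; f_equal; ring. }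
  rewrite E. eapply Rle_lt_trans. apply Cmod_triangle.
  pose proof (Cmod_le_abs (a + - x) (b + - y)). lra.
Qed.

Lemma deriv_neg (f : R -> R) x l : is_derive f (-x) l -> is_derive (fun t => - f (-t)) x l.
Proof.
  intros H.
  assert (H2 : is_derive (fun t => - t) x (-1)).
  { auto_derive; [exact I | ring]. }
  pose proof (is_derive_comp f (fun t => -t) x l (-1) H H2) as H3.
  pose proof (is_derive_opp _ _ _ H3) as H4.
  replace l with (opp (scal (-1) l)) by (unfold opp, scal; simpl; unfold mult; simpl; ring).
  exact H4.
Qed.

Lemma C1_neg (u : R -> R -> R) r : comp_C1_on u r -> comp_C1_on (fun x y => - u (-x) (-y)) r.
Proof.
  intros [H1 H2].
  assert (Hm : forall x y, Cmod (x, y) < r -> Cmod (-x, -y) < r).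
  { intros x y Hxy. change (-x, -y) with (Copp (x,y)). rewrite Cmod_opp. exact Hxy. }
  assert (D1 : forall x y, Cmod (x,y) < r ->
     is_derive (fun t => - u (-t) (-y)) x (Derive (fun t => u t (-y)) (-x))).
  { intros x y Hxy. apply (deriv_neg (fun t => u t (-y)) x). apply (Derive_correct (fun t => u t (-y))). exact (proj1 (H1 _ _ (Hm _ _ Hxy))). }
  assert (D2 : forall x y, Cmod (x,y) < r ->
     is_derive (fun t => - u (-x) (-t)) y (Derive (fun t => u (-x) t) (-y))).
  { intros x y Hxy. apply (deriv_neg (fun t => u (-x) t) y). apply (Derive_correct (fun t => u (-x) t)). exact (proj2 (H1 _ _ (Hm _ _ Hxy))). }
  split.
  - intros x y Hxy. split; eexists; [apply D1 | apply D2]; exact Hxy.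
  - intros x y Hxy. pose proof (H2 _ _ (Hm _ _ Hxy)) as [C1 C2].
    assert (Cn : continuous (fun q : R * R => (- fst q, - snd q)) (x, y)).
    { apply (continuous_comp_2 (fun q : R*R => - fst q) (fun q : R*R => - snd q) (fun a b => (a, b))).
      - apply (continuous_comp (fun q : R*R => fst q) Ropp). apply continuous_fst. exact (continuous_opp (fun t : R => t) _ (continuous_id _)).
      - apply (continuous_comp (fun q : R*R => snd q) Ropp). apply continuous_snd. exact (continuous_opp (fun t : R => t) _ (continuous_id _)).
      - apply continuous_ext with (f := fun q : R * R => q). intros [a b]; reflexivity. apply continuous_id. }
    split.
    + eapply continuous_ext_loc.
      2: { apply (continuous_comp (fun q : R*R => (- fst q, - snd q)) (fun q : R * R => Derive (fun t : R => u t (snd q)) (fst q))). exact Cn. exact C1. }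
      eapply filter_imp. 2: apply (loc_ball _ _ _ Hxy).
      intros [a b] Hab. simpl in *. symmetry. apply is_derive_unique. apply D1. exact Hab.
    + eapply continuous_ext_loc.
      2: { apply (continuous_comp (fun q : R*R => (- fst q, - snd q)) (fun q : R * R => Derive (fun t : R => u (fst q) t) (snd q))). exact Cn. exact C2. }
      eapply filter_imp. 2: apply (loc_ball _ _ _ Hxy).
      intros [a b] Hab. simpl in *. symmetry. apply is_derive_unique. apply D2. exact Hab.
Qed.

Lemma Im_odd (A B : C) : Im (Cmult (RtoC (/ 2)) (Cminus A B)) = / 2 * (Im A - Im B).
Proof. destruct A as [a1 a2], B as [b1 b2]. unfold Cmult, Cminus, Cplus, Copp, RtoC, Im; simpl. ring. Qed.

Lemma Copp_inv (z : C) : Copp (Copp z) = z.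
Proof. destruct z; unfold Copp; simpl; f_equal; ring. Qed.

Theorem lemma2p3 (g : C -> C) (N : nat) (c : nat -> nat -> C) :
  C1_near0 g -> even_near0 g -> little_o0 g (fun z => z) ->
  poly_condition g (poly2 N c) ->
  poly_condition g (odd_part (poly2 N c)).
Proof.
  intros _ [r [hr Hev]] _ HP Rf HRC HRo.
  set (R' := fun w => Copp (Rf (Copp w))).
  assert (HRC' : C1_near0 R').
  { destruct HRC as [r0 [hr0 [Hre Him]]]. exists r0. split; [exact hr0|split].
    - exact (C1_neg _ _ Hre).
    - exact (C1_neg _ _ Him). }
  assert (HRo' : little_o0 R' g).
  { intros eps he. destruct (HRo eps he) as [d [hd H]]. exists (Rmin d r). split.
    - apply Rmin_pos; assumption.
    - intros z Hz. unfold R'. rewrite Cmod_opp.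
      rewrite <- (Hev z) by (eapply Rlt_le_trans; [exact Hz | apply Rmin_r]).
      apply H. rewrite Cmod_opp. eapply Rlt_le_trans; [exact Hz | apply Rmin_l]. }
  destruct (HP Rf HRC HRo) as [d1 [hd1 H1]].
  destruct (HP R' HRC' HRo') as [d2 [hd2 H2]].
  exists (Rmin (Rmin d1 d2) r). split.
  { apply Rmin_pos; [apply Rmin_pos|]; assumption. }
  intros z [Hz0 Hz].
  assert (Hzd1 : Cmod z < d1) by (eapply Rlt_le_trans; [exact Hz|]; eapply Rle_trans; [apply Rmin_l| apply Rmin_l]).
  assert (Hzd2 : Cmod z < d2) by (eapply Rlt_le_trans; [exact Hz|]; eapply Rle_trans; [apply Rmin_l| apply Rmin_r]).
  assert (Hzr : Cmod z < r) by (eapply Rlt_le_trans; [exact Hz| apply Rmin_r]).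
  assert (Hge : g (Copp z) = g z) by (apply Hev; exact Hzr).
  assert (HR'z : R' (Copp z) = Copp (Rf z)) by (unfold R'; rewrite Copp_inv; reflexivity).
  destruct (H1 z (conj Hz0 Hzd1)) as [A1 A2].
  assert (Hmz : 0 < Cmod (Copp z) < d2) by (rewrite Cmod_opp; split; assumption).
  destruct (H2 (Copp z) Hmz) as [B1 B2].
  rewrite Hge, HR'z in B1, B2.
  assert (E1 : Copp (Cplus (Cplus (Cconj z) (g z)) (Rf z)) =
               Cplus (Cminus (Cconj (Copp z)) (g z)) (Copp (Rf z))).
  { destruct z, (g _), (Rf _); unfold Cplus, Cminus, Copp, Cconj; simpl; f_equal; ring. }
  assert (E2 : Copp (Cplus (Cminus (Cconj z) (g z)) (Rf z)) =
               Cplus (Cplus (Cconj (Copp z)) (g z)) (Copp (Rf z))).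
  { destruct z, (g _), (Rf _); unfold Cplus, Cminus, Copp, Cconj; simpl; f_equal; ring. }
  unfold odd_part. rewrite !Im_odd, E1, E2. split; lra.
Qed.
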